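(* Let $q\in(0,1]$. Consider the parametric convex semi-infinite problem described in the context, and let $(\bar c,\bar b)\in\mathbb{R}^n\times\mathcal{C}(T,\mathbb{R})$ and $\bar x\in\mathcal{S}(\bar c,\bar b)$. Assume that $P(\bar c,\bar b)$ satisfies the Slater condition. Consider the statements: (i) $\mathcal{S}$ is $q$-order calm at $((\bar c,\bar b),\bar x)$; (ii) $\mathcal{S}_{\bar c}$ is $q$-order calm at $(\bar b,\bar x)$; (iii) $\mathcal{L}$ is $q$-order calm at $((f(\bar x)+\langle\bar c,\bar x\rangle,\bar b),\bar x)$; (iv) $\bar f$ admits a $q$-order local error bound at $\bar x$, i.e. there exist $\tau>0$, $\delta>0$ with $\tau\, d(x,[\bar f\le 0])\le [\max\{\bar f(x),0\}]^q$ for all $x$ with $\|x-\bar x\|<\delta$. Then (iii) $\Leftrightarrow$ (iv) $\Rightarrow$ (i) $\Rightarrow$ (ii). In addition, if $f$ and all $g_t$ ($t\in T$) are linear, then (i) $\Leftrightarrow$ (ii) $\Leftrightarrow$ (iii) $\Leftrightarrow$ (iv).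
   Context: Setting: $T$ is a compact subset of a metric space $Z$ with $T\neq Z$; $f:\mathbb{R}^n\to\mathbb{R}$ and $g_t:\mathbb{R}^n\to\mathbb{R}$ ($t\in T$) are convex, and $(t,x)\mapsto g_t(x)$ is continuous on $T\times\mathbb{R}^n$. $\mathcal{C}(T,\mathbb{R})$ is the space of continuous functions $b:T\to\mathbb{R}$, $t\mapsto b_t$, with $\|b\|_\infty=\max_{t\in T}|b_t|$. For $(c,b)\in\mathbb{R}^n\times\mathcal{C}(T,\mathbb{R})$ the problem $P(c,b)$ is: minimize $f(x)+\langle c,x\rangle$ subject to $g_t(x)\le b_t$ for all $t\in T$. The parameter space carries the norm $\|(c,b)\|=\max\{\|c\|,\|b\|_\infty\}$ ($\|\cdot\|$ Euclidean on $\mathbb{R}^n$). $\mathcal{S}(c,b)$ is the set of optimal solutions of $P(c,b)$; $\mathcal{S}_c(b):=\mathcal{S}(c,b)$ for fixed $c$; $\mathcal{F}(b):=\{x: g_t(x)\le b_t,\ t\in T\}$. $P(c,b)$ satisfies the Slater condition if there is $\hat x$ with $g_t(\hat x)<b_t$ for all $t\in T$. The level set mapping $\mathcal{L}:\mathbb{R}\times\mathcal{C}(T,\mathbb{R})\rightrightarrows\mathbb{R}^n$ is $\mathcal{L}(\alpha,b)=\{x: f(x)+\langle\bar c,x\rangle\le\alpha,\ g_t(x)\le b_t,\ t\in T\}$, with $\mathbb{R}\times\mathcal{C}(T,\mathbb{R})$ normed by $\max\{|\alpha|,\|b\|_\infty\}$. The supremum function is $\bar f(x):=\sup\{f(x)-f(\bar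 x)+\langle\bar c,x-\bar x\rangle;\ g_t(x)-\bar b_t,\ t\in T\}$, and $[\bar f\le0]=\{x:\bar f(x)\le0\}$. For a set-valued map $S:Y\rightrightarrows X$ between metric spaces, $(\bar y,\bar x)\in\operatorname{gph}S$ and $q>0$, $S$ is $q$-order calm at $(\bar y,\bar x)$ if there exist $\tau>0$ and neighbourhoods $U$ of $\bar x$, $V$ of $\bar y$ such that $\tau\, d(x,S(\bar y))\le d(y,\bar y)^q$ for all $y\in V$ and $x\in S(y)\cap U$. *)

(* Defs.v *)
From HB Require Import structures.
From mathcomp Require Import all_boot all_order all_algebra.
From mathcomp Require Import all_classical all_reals all_analysis.
Set Implicit Arguments. Unset Strict Implicit. Unset Printing Implicit Defensive.
Import Order.TTheory GRing.Theory Num.Theory.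
Import numFieldNormedType.Exports.
Local Open Scope classical_set_scope.
Local Open Scope ring_scope.

Section Defs.
Variables (R : realType) (n : nat).

Definition dotp (u v : 'rV[R]_n) : R := \sum_(i < n) u ord0 i * v ord0 i.
Definition enorm (u : 'rV[R]_n) : R := Num.sqrt (dotp u u).
Definition eucl_dist (u v : 'rV[R]_n) : R := enorm (u - v).

(* distance from a point to a set (for a given distance function);
   only used for nonempty sets *)
Definition set_dist {X : Type} (d : X -> X -> R) (x : X) (A : set X) : R :=
  inf [set d x a | a in A].

Definition convex_fun (h : 'rV[R]_n -> R) : Prop :=
  forall x y (l : R), 0 <= l -> l <= 1 ->
    h (l *: x + (1 - l) *: y) <= l * h x + (1 - l) * h y.

Definition linear_fun (h : 'rV[R]_n -> R) : Prop :=
  (forall x y, h (x + y) = h x + h y) /\ (forall (l : R) x, h (l *: x) = l * h x).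

Variables (Z : metricType R) (T : set Z).

(* sup norm on C(T,R) (functions Z -> R continuous on T; only values on T matter) *)
Definition supnormT (b : Z -> R) : R := sup [set `|b t| | t in T].
Definition is_CT (b : Z -> R) : Prop := {within T, continuous b}.

Variables (f : 'rV[R]_n -> R) (g : Z -> 'rV[R]_n -> R).

Definition feas (b : Z -> R) : set 'rV[R]_n :=
  [set x | forall t, T t -> g t x <= b t].

Definition optsol (c : 'rV[R]_n) (b : Z -> R) : set 'rV[R]_n :=
  [set x | feas b x /\ forall y, feas b y -> f x + dotp c x <= f y + dotp c y].

Definition slater (b : Z -> R) : Prop :=
  exists xh : 'rV[R]_n, forall t, T t -> g t xh < b t.

Definition levelmap (cbar : 'rV[R]_n) (ab : R * (Z -> R)) : set 'rV[R]_n :=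
  [set x | f x + dotp cbar x <= ab.1 /\ feas ab.2 x].

Definition supfun (cbar : 'rV[R]_n) (bbar : Z -> R) (xbar : 'rV[R]_n)
    (x : 'rV[R]_n) : R :=
  sup ([set f x - f xbar + dotp cbar (x - xbar)]
       `|` [set g t x - bbar t | t in T]).

End Defs.

(* q-order calmness of S : Y ==> X at (ybar, xbar), where the parameter
   space is the subset Ydom of Y with distance dY, and X has distance dX;
   neighbourhoods are expressed through balls. *)
Definition q_calm {R : realType} {Y X : Type} (Ydom : set Y)
    (dY : Y -> Y -> R) (dX : X -> X -> R) (S : Y -> set X) (q : R)
    (ybar : Y) (xbar : X) : Prop :=
  exists tau : R, 0 < tau /\ exists eps : R, 0 < eps /\ exists delta : R, 0 < delta /\
    forall y, Ydom y -> dY y ybar < delta ->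
    forall x, S y x -> dX x xbar < eps ->
      tau * set_dist dX x (S ybar) <= powR (dY y ybar) q.

(* Main.v *)
Require Import Defs.
From HB Require Import structures.
From mathcomp Require Import all_boot all_order all_algebra.
From mathcomp Require Import all_classical all_reals all_analysis.
From mathcomp Require Import ring lra.
Import Order.TTheory GRing.Theory Num.Theory.
Import numFieldNormedType.Exports.
Local Open Scope classical_set_scope.
Local Open Scope ring_scope.
Set Implicit Arguments. Unset Strict Implicit. Unset Printing Implicit Defensive.


Section Dotp.
Variables (R : realType) (n : nat).
Implicit Types u v w : 'rV[R]_n.

Lemma dotpC u v : dotp u v = dotp v u.
Proof. by apply: eq_bigr => i _; rewrite mulrC. Qed.

Lemma dotpDl u v w : dotp (u + v) w = dotp u w + dotp v w.
Proof. by rewrite /dotp -big_split; apply: eq_bigr => i _; rewrite mxE mulrDl. Qed.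

Lemma dotpDr u v w : dotp w (u + v) = dotp w u + dotp w v.
Proof. by rewrite dotpC dotpDl !(dotpC w). Qed.

Lemma dotpZl (l : R) u v : dotp (l *: u) v = l * dotp u v.
Proof. by rewrite /dotp mulr_sumr; apply: eq_bigr => i _; rewrite mxE mulrA. Qed.

Lemma dotpZr (l : R) u v : dotp v (l *: u) = l * dotp v u.
Proof. by rewrite dotpC dotpZl dotpC. Qed.

Lemma dotpNl u v : dotp (- u) v = - dotp u v.
Proof. by rewrite -scaleN1r dotpZl mulN1r. Qed.

Lemma dotpNr u v : dotp v (- u) = - dotp v u.
Proof. by rewrite dotpC dotpNl dotpC. Qed.

Lemma dotpBl u v w : dotp (u - v) w = dotp u w - dotp v w.
Proof. by rewrite dotpDl dotpNl. Qed.

Lemma dotpBr u v w : dotp w (u - v) = dotp w u - dotp w v.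
Proof. by rewrite dotpDr dotpNr. Qed.

Lemma dotp0l v : dotp 0 v = 0.
Proof. by rewrite /dotp big1 // => i _; rewrite mxE mul0r. Qed.

Lemma dotp0r v : dotp v 0 = 0.
Proof. by rewrite dotpC dotp0l. Qed.

Lemma dotp_ge0 u : 0 <= dotp u u.
Proof. by apply: sumr_ge0 => i _; rewrite -expr2 sqr_ge0. Qed.

Lemma dotp_eq0 u : dotp u u = 0 -> u = 0.
Proof.
move=> /eqP; rewrite psumr_eq0; last by move=> i _; rewrite -expr2 sqr_ge0.
move=> /allP H; apply/rowP => i; rewrite mxE.
by have := H i (mem_index_enum _); rewrite -expr2 sqrf_eq0 => /eqP.
Qed.

Lemma CS2 u v : dotp u v ^+ 2 <= dotp u u * dotp v v.
Proof.
have [v0|vpos] := eqVneq (dotp v v) 0.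
  by rewrite (dotp_eq0 v0) dotp0r dotp0l expr0n /= mulr0.
have vge := dotp_ge0 v.
have vgt : 0 < dotp v v by rewrite lt_def vpos vge.
set t := dotp u v / dotp v v.
have := dotp_ge0 (u - t *: v).
rewrite !dotpBl !dotpBr !dotpZl !dotpZr (dotpC v u).
move=> H.
have e : t * dotp v v = dotp u v by rewrite /t mulfVK.
move: H; set a := dotp u u; set b := dotp u v; set c := dotp v v.
move: e vge vgt; rewrite -/a -/b -/c => e vge vgt H.
rewrite -e in H *.
have H2 := mulr_ge0 H vge.
rewrite expr2; nra.
Qed.

Lemma enorm_ge0 u : 0 <= enorm u.
Proof. exact: sqrtr_ge0. Qed.

Lemma enorm_sq u : enorm u ^+ 2 = dotp u u.
Proof. by rewrite sqr_sqrtr // dotp_ge0. Qed.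

Lemma CS u v : `|dotp u v| <= enorm u * enorm v.
Proof.
rewrite -(ler_pXn2r (_ : (0 < 2)%N)) ?nnegrE ?mulr_ge0 ?enorm_ge0 //.
by rewrite real_normK ?num_real // exprMn !enorm_sq CS2.
Qed.

Lemma CSle u v : dotp u v <= enorm u * enorm v.
Proof. exact: le_trans (ler_norm _) (CS u v). Qed.

Lemma enormD u v : enorm (u + v) <= enorm u + enorm v.
Proof.
rewrite -(ler_pXn2r (_ : (0 < 2)%N)) ?nnegrE ?addr_ge0 ?enorm_ge0 //.
rewrite enorm_sq dotpDl !dotpDr sqrrD !enorm_sq (dotpC v u).
have := CSle u v; lra.
Qed.

Lemma enorm0 : enorm (0 : 'rV[R]_n) = 0.
Proof. by rewrite /enorm dotp0l sqrtr0. Qed.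

Lemma enormZ (l : R) u : enorm (l *: u) = `|l| * enorm u.
Proof.
by rewrite /enorm dotpZl dotpZr mulrA -expr2 sqrtrM ?sqr_ge0 // sqrtr_sqr.
Qed.

Lemma enormN u : enorm (- u) = enorm u.
Proof. by rewrite -scaleN1r enormZ normrN normr1 mul1r. Qed.

Lemma enormB u v : enorm (u - v) = enorm (v - u).
Proof. by rewrite -enormN opprB. Qed.

Lemma enorm_eq0 u : enorm u = 0 -> u = 0.
Proof. by move=> /eqP; rewrite sqrtr_eq0 => H; apply: dotp_eq0; apply/eqP; rewrite eq_le H dotp_ge0. Qed.

Lemma enorm_tri3 u v w : enorm (u - w) <= enorm (u - v) + enorm (v - w).
Proof.
have -> : u - w = (u - v) + (v - w) by rewrite addrA subrK.
exact: enormD.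
Qed.

End Dotp.


Section Topo.
Variable R : realType.

Lemma slice_cont (Z X U : topologicalType) (T : set Z) (G : Z * X -> U) x :
  {within T `*` setT, continuous G} -> {within T, continuous (fun t => G (t, x))}.
Proof.
move=> /subspace_continuousP HG; apply/subspace_continuousP => t Tt.
have := HG (t, x) (conj Tt I).
move=> H; apply: cvg_trans _ (H) => {H}.
move=> B /= [[P Q] [Pt Qx] sPQ].
rewrite /within /=; apply: filterS Pt => s Ps Ts.
by apply: sPQ; split => //=; exact: nbhs_singleton.
Qed.

Lemma cont_norm (Z : topologicalType) (T : set Z) (h : Z -> R) :
  {within T, continuous h} -> {within T, continuous (fun t => `|h t|)}.
Proof. by move=> hc x; apply: cvg_norm; exact: hc. Qed.

Lemma cont_bounded (Z : topologicalType) (T : set Z) (h : Z -> R) :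
  compact T -> {within T, continuous h} -> exists M, forall t, T t -> `|h t| <= M.
Proof.
move=> cT hc.
have [->|T0] := eqVneq T set0; first by exists 0.
have T0' : T !=set0 by apply/set0P.
have /(compact_EVT_max T0' cT) [c _ Hc] := cont_norm hc.
by exists `|h c| => t Tt; apply: Hc; rewrite inE.
Qed.

Lemma cont_min_pos (Z : topologicalType) (T : set Z) (h : Z -> R) :
  compact T -> {within T, continuous h} -> (forall t, T t -> 0 < h t) ->
  exists2 e, 0 < e & forall t, T t -> e <= h t.
Proof.
move=> cT hc hp.
have [->|T0] := eqVneq T set0; first by exists 1.
have T0' : T !=set0 by apply/set0P.
have [c cT' Hc] := compact_EVT_min T0' cT hc.
by exists (h c) => [|t Tt]; [apply: hp; move: cT'; rewrite inE | apply: Hc; rewrite inE].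
Qed.

End Topo.


Section SD.
Variables (R : realType) (X : Type) (d : X -> X -> R).
Hypothesis Hd : forall x y, 0 <= d x y.

Lemma set_dist_ge0 x A : 0 <= set_dist d x A.
Proof.
rewrite /set_dist.
have [->|A0] := eqVneq A set0; first by rewrite image_set0 inf0.
have /set0P [a Aa] := A0.
apply: lb_le_inf; first by exists (d x a); exists a.
by move=> _ [y _ <-].
Qed.

Lemma set_dist_le x A a : A a -> set_dist d x A <= d x a.
Proof.
move=> Aa; rewrite /set_dist; apply: ge_inf; last by exists a.
by exists 0 => _ [y _ <-].
Qed.
End SD.

Section SN.
Variables (R : realType) (Z : metricType R) (T : set Z).

Lemma supn_ge0 (b : Z -> R) : 0 <= supnormT T b.
Proof.
rewrite /supnormT; case: (pselect (has_sup [set `|b t| | t in T])) => [hs|hs].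
  have [[y [t Tt e]] _] := hs.
  apply: le_trans (normr_ge0 (b t)) _; apply: sup_upper_bound => //; exists t => //.
by rewrite sup_out.
Qed.

Lemma supn_ub (b : Z -> R) t : compact T -> is_CT T b -> T t -> `|b t| <= supnormT T b.
Proof.
move=> cT hb Tt; have [M HM] := cont_bounded cT hb.
apply: ub_le_sup; last by exists t.
by exists M => _ [s Ts <-]; apply: HM.
Qed.

Lemma supn_le (b : Z -> R) M : 0 <= M -> (forall t, T t -> `|b t| <= M) -> supnormT T b <= M.
Proof.
move=> M0 HM; rewrite /supnormT.
have [->|T0] := eqVneq T set0; first by rewrite image_set0 sup0.
have /set0P [t Tt] := T0.
by apply: ge_sup; [exists `|b t|; exists t | move=> _ [s Ts <-]; apply: HM].
Qed.

Lemma is_CT_B (b b' : Z -> R) : is_CT T b -> is_CT T b' -> is_CT T (b \- b').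
Proof. by move=> hb hb' x; apply: cvgB; [exact: hb | exact: hb']. Qed.

Lemma is_CT_D (b b' : Z -> R) : is_CT T b -> is_CT T b' -> is_CT T (b \+ b').
Proof. by move=> hb hb' x; apply: cvgD; [exact: hb | exact: hb']. Qed.

Lemma is_CT_cst (r : R) : is_CT T (fun _ => r).
Proof. by move=> x; exact: cvg_cst. Qed.

Lemma is_CT_max (b b' : Z -> R) : is_CT T b -> is_CT T b' -> is_CT T (fun t => Num.max (b t) (b' t)).
Proof. by move=> hb hb' x; exact: (@continuous_max _ (subspace T) b b' x (hb x) (hb' x)). Qed.

End SN.


Section Prob.
Variables (R : realType) (n : nat) (Z : metricType R) (T : set Z)
  (f : 'rV[R]_n -> R) (g : Z -> 'rV[R]_n -> R)
  (cbar : 'rV[R]_n) (bbar : Z -> R) (xbar : 'rV[R]_n).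
Hypotheses (cT : compact T)
  (Hg : {within T `*` setT, continuous (fun p : Z * 'rV[R]_n => g p.1 p.2)})
  (Hb : is_CT T bbar) (Hopt : optsol T f g cbar bbar xbar).

Lemma gcont x : is_CT T (fun t => g t x).
Proof. have H := @slice_cont Z _ _ T _ x Hg. exact: H. Qed.

Let E x := [set f x - f xbar + dotp cbar (x - xbar)] `|` [set g t x - bbar t | t in T].

Lemma E_ub x : has_ubound (E x).
Proof.
have [M HM] := cont_bounded cT (is_CT_B (gcont (x:=x)) Hb).
exists (Num.max (f x - f xbar + dotp cbar (x - xbar)) M) => _ [->|[t Tt <-]].
  by rewrite le_max lexx.
rewrite le_max; apply/orP; right; apply: le_trans (ler_norm _) _; exact: HM.
Qed.

Lemma fbar_ge1 x : f x - f xbar + dotp cbar (x - xbar) <= supfun T f g cbar bbar xbar x.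
Proof. by apply: ub_le_sup; [exact: E_ub | left]. Qed.

Lemma fbar_ge2 x t : T t -> g t x - bbar t <= supfun T f g cbar bbar xbar x.
Proof. by move=> Tt; apply: ub_le_sup; [exact: E_ub | right; exists t]. Qed.

Lemma fbar_le x M : f x - f xbar + dotp cbar (x - xbar) <= M ->
  (forall t, T t -> g t x - bbar t <= M) -> supfun T f g cbar bbar xbar x <= M.
Proof.
move=> h1 h2; apply: ge_sup; first by exists (f x - f xbar + dotp cbar (x - xbar)); left.
by move=> _ [->|[t Tt <-]] //; apply: h2.
Qed.

Lemma Sbar_eq : optsol T f g cbar bbar = [set y | supfun T f g cbar bbar xbar y <= 0].
Proof.
have [Fx Ox] := Hopt.
rewrite predeqE => y; split.
  move=> [Fy Oy]; apply: fbar_le.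
    have := Oy _ Fx; rewrite dotpBr; lra.
  by move=> t Tt; rewrite subr_le0; apply: Fy.
move=> H.
have Fy : feas T g bbar y.
  by move=> t Tt; have := le_trans (fbar_ge2 y Tt) H; rewrite subr_le0.
split => // z Fz.
have := le_trans (fbar_ge1 y) H; have := Ox _ Fz; rewrite dotpBr; lra.
Qed.

Lemma Lbar_eq : levelmap T f g cbar (f xbar + dotp cbar xbar, bbar)
   = [set y | supfun T f g cbar bbar xbar y <= 0].
Proof.
rewrite predeqE => y; split.
  move=> [/= H1 Fy]; apply: fbar_le.
    by move: H1; rewrite dotpBr; lra.
  by move=> t Tt; rewrite subr_le0; apply: Fy.
move=> H; split => /=.
  by have := le_trans (fbar_ge1 y) H; rewrite dotpBr; lra.
by move=> t Tt; have := le_trans (fbar_ge2 y Tt) H; rewrite subr_le0.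
Qed.

Lemma fbar_xbar : supfun T f g cbar bbar xbar xbar <= 0.
Proof. by have := Hopt; rewrite Sbar_eq. Qed.

End Prob.


Lemma powR_mono (R : realType) (q a b : R) : 0 <= q -> 0 <= a -> a <= b -> a `^ q <= b `^ q.
Proof. by move=> q0 a0 ab; apply: ge0_ler_powR => //; rewrite nnegrE //; apply: le_trans ab. Qed.

Section General.
Variables (R : realType) (n : nat) (Z : metricType R) (T : set Z)
  (f : 'rV[R]_n -> R) (g : Z -> 'rV[R]_n -> R) (q : R)
  (cbar : 'rV[R]_n) (bbar : Z -> R) (xbar : 'rV[R]_n).
Hypotheses (cT : compact T)
  (Hg : {within T `*` setT, continuous (fun p : Z * 'rV[R]_n => g p.1 p.2)})
  (Hb : is_CT T bbar) (Hopt : optsol T f g cbar bbar xbar) (q0 : 0 < q).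

Local Notation fbar := (supfun T f g cbar bbar xbar).
Local Notation dAB := (fun (ab ab' : R * (Z -> R)) =>
    Num.max (`|ab.1 - ab'.1| : R) (supnormT T (ab.2 \- ab'.2))).
Local Notation st_iv := (exists tau : R, 0 < tau /\ exists delta : R, 0 < delta /\
      forall x, enorm (x - xbar) < delta ->
        tau * set_dist (@eucl_dist R n) x [set y | fbar y <= 0]
          <= powR (Num.max (fbar x) 0) q).

Lemma eucl_ge0 (x y : 'rV[R]_n) : 0 <= eucl_dist x y.
Proof. exact: enorm_ge0. Qed.

Lemma iii_iv : q_calm (fun ab => is_CT T ab.2) dAB (@eucl_dist R n)
      (levelmap T f g cbar) q (f xbar + dotp cbar xbar, bbar) xbar -> st_iv.
Proof.
move=> [tau [tau0 [eps [eps0 [del [del0 H]]]]]].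
rewrite (Lbar_eq f cbar xbar cT Hg Hb) in H.
have dq0 : 0 < del `^ q by apply: powR_gt0.
exists (Num.min tau (del `^ q / eps)); split; first by rewrite lt_min tau0 divr_gt0.
exists eps; split => // x xe.
set r := Num.max (fbar x) 0.
have r0 : 0 <= r by rewrite le_max lexx orbT.
have fr : fbar x <= r by rewrite /r le_max lexx.
have sd0 : 0 <= set_dist (@eucl_dist R n) x [set y | fbar y <= 0].
  by apply: set_dist_ge0 => ? ?; exact: eucl_ge0.
have [rlt|rge] := ltP r del.
  pose y : R * (Z -> R) := (f xbar + dotp cbar xbar + r, fun t => bbar t + r).
  have Dle : dAB y (f xbar + dotp cbar xbar, bbar) <= r.
    rewrite ge_max; apply/andP; split.
      by rewrite /y /= addrAC subrr add0r ger0_norm.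
    by apply: supn_le => // t _ /=; rewrite addrAC subrr add0r ger0_norm.
  have D0 : 0 <= dAB y (f xbar + dotp cbar xbar, bbar).
    by rewrite le_max normr_ge0.
  have := H y (is_CT_D Hb (@is_CT_cst _ _ T r)) (le_lt_trans Dle rlt) x.
  move=> /(_ _ xe) H1.
  have Lx : levelmap T f g cbar y x.
    split => /=.
      have := le_trans (fbar_ge1 f cbar xbar cT Hg Hb x) fr.
      rewrite -/r dotpBr; lra.
    move=> t Tt; have := le_trans (fbar_ge2 f cbar xbar cT Hg Hb x Tt) fr.
    rewrite -/r; lra.
  have {}H1 := H1 Lx.
  have h2 : Num.min tau (del `^ q / eps) * set_dist (@eucl_dist R n) x [set y | fbar y <= 0]
     <= tau * set_dist (@eucl_dist R n) x [set y | fbar y <= 0].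
    by apply: ler_wpM2r => //; rewrite ge_min lexx.
  apply: le_trans h2 _; apply: le_trans H1 _; exact: powR_mono (ltW q0) D0 Dle.
have sdle : set_dist (@eucl_dist R n) x [set y | fbar y <= 0] <= eps.
  have h3 : set_dist (@eucl_dist R n) x [set y | fbar y <= 0] <= eucl_dist x xbar.
    by apply: set_dist_le; [move=> ? ?; exact: eucl_ge0 | exact: (fbar_xbar cT Hg Hb Hopt)].
  apply: le_trans h3 _.
  exact: ltW.
have h4 : Num.min tau (del `^ q / eps) * set_dist (@eucl_dist R n) x [set y | fbar y <= 0]
   <= del `^ q / eps * set_dist (@eucl_dist R n) x [set y | fbar y <= 0].
  by apply: ler_wpM2r => //; rewrite ge_min lexx orbT.
apply: le_trans h4 _.
have h5 : del `^ q / eps * set_dist (@eucl_dist R n) x [set y | fbar y <= 0] <= del `^ q / eps * eps.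
  by apply: ler_wpM2l => //; rewrite divr_ge0 // ltW.
apply: le_trans h5 _.
rewrite mulfVK ?gt_eqF //; exact: powR_mono (ltW q0) (ltW del0) rge.
Qed.

Lemma iv_iii : st_iv -> q_calm (fun ab => is_CT T ab.2) dAB (@eucl_dist R n)
      (levelmap T f g cbar) q (f xbar + dotp cbar xbar, bbar) xbar.
Proof.
move=> [tau [tau0 [del [del0 H]]]].
exists tau; split => //; exists del; split => //; exists 1; split => //.
move=> [al b] /= bC _ x [/= Hx Fx] xd.
rewrite (Lbar_eq f cbar xbar cT Hg Hb).
set D := Num.max _ _.
have D1 : `|al - (f xbar + dotp cbar xbar)| <= D by rewrite le_max lexx.
have D2 : supnormT T (b \- bbar) <= D by rewrite le_max lexx orbT.
have D0 : 0 <= D by apply: le_trans D1.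
apply: le_trans (H x xd) _; apply: powR_mono (ltW q0) _ _.
  by rewrite le_max lexx orbT.
rewrite ge_max D0 andbT; apply: fbar_le.
  apply: le_trans D1; apply: le_trans (ler_norm _); move: Hx; rewrite dotpBr; lra.
move=> t Tt; apply: le_trans D2.
have := supn_ub cT (is_CT_B bC Hb) Tt; have := Fx t Tt; rewrite /=.
move=> h1 h2; apply: le_trans h2; apply: le_trans (ler_norm _); lra.
Qed.


Local Notation dCB := (fun (cb cb' : 'rV[R]_n * (Z -> R)) =>
    Num.max (enorm (cb.1 - cb'.1)) (supnormT T (cb.2 \- cb'.2))).
Local Notation dB := (fun (b b' : Z -> R) => supnormT T (b \- b')).

Lemma i_ii : q_calm (fun cb => is_CT T cb.2) dCB (@eucl_dist R n)
      (fun cb => optsol T f g cb.1 cb.2) q (cbar, bbar) xbar ->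
   q_calm (is_CT T) dB (@eucl_dist R n) (fun b => optsol T f g cbar b) q bbar xbar.
Proof.
move=> [tau [tau0 [eps [eps0 [del [del0 H]]]]]].
exists tau; split => //; exists eps; split => //; exists del; split => //.
move=> b bC bd x Sx xe.
have e : dCB (cbar, b) (cbar, bbar) = supnormT T (b \- bbar).
  by rewrite /= subrr enorm0; apply/max_idPr; exact: supn_ge0.
have := H (cbar, b) bC; rewrite e => /(_ bd x Sx xe); exact.
Qed.

Lemma iv_i : convex_fun f -> (forall t, T t -> convex_fun (g t)) -> slater T g bbar ->
  st_iv -> q_calm (fun cb => is_CT T cb.2) dCB (@eucl_dist R n)
      (fun cb => optsol T f g cb.1 cb.2) q (cbar, bbar) xbar.
Proof.
move=> fconv gconv [xh Hxh] [tau [tau0 [del [del0 H]]]].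
have [eps eps0 Heps] : exists2 e, 0 < e & forall t, T t -> e <= bbar t - g t xh.
  apply: cont_min_pos => //; first exact: is_CT_B Hb (gcont (x:=xh) Hg).
  by move=> t Tt; rewrite subr_gt0; apply: Hxh.
set A := Num.max 0 (f xh - f xbar + dotp cbar (xh - xbar)).
have A0 : 0 <= A by rewrite le_max lexx.
set K := 1 + A / eps + enorm (xh - xbar) + del.
have K1 : 1 <= K.
  rewrite /K -!addrA lerDl; apply: addr_ge0; first by rewrite divr_ge0 // ltW.
  by apply: addr_ge0; [exact: enorm_ge0 | exact: ltW].
have K0 : 0 < K by apply: lt_le_trans K1.
have Kq0 : 0 < K `^ q by apply: powR_gt0.
exists (tau / K `^ q); split; first by rewrite divr_gt0.
exists del; split => //; exists eps; split => //.
move=> [c b] /= bC Dlt x [Fx Ox] xd.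
rewrite (Sbar_eq cT Hg Hb Hopt).
set D := Num.max _ _.
have D1 : enorm (c - cbar) <= D by rewrite le_max lexx.
have D2 : supnormT T (b \- bbar) <= D by rewrite le_max lexx orbT.
have D0 : 0 <= D by apply: le_trans D1; exact: enorm_ge0.
have bD : forall t, T t -> `|b t - bbar t| <= D.
  move=> t Tt; apply: le_trans D2; exact: supn_ub cT (is_CT_B bC Hb) Tt.
set mu := D / eps.
have mu0 : 0 <= mu by rewrite divr_ge0 // ltW.
have mu1 : mu <= 1 by rewrite ler_pdivrMr // mul1r ltW.
have mueps : mu * eps = D by rewrite /mu mulfVK // gt_eqF.
set y := mu *: xh + (1 - mu) *: xbar.
have [Fxb Oxb] := Hopt.
have Fy : feas T g b y.
  move=> t Tt; have := gconv t Tt xh xbar mu mu0 mu1.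
  have := Fxb t Tt; have := Heps t Tt; have := bD t Tt.
  rewrite -/y => h1 h2 h3 h4; apply: le_trans h4 _.
  have := ler_norm (bbar t - b t); rewrite distrC => h5.
  have h6 := le_trans h5 h1.
  have h7 : mu * g t xh <= mu * (bbar t - eps) by apply: ler_wpM2l => //; lra.
  have h8 : (1 - mu) * g t xbar <= (1 - mu) * bbar t by apply: ler_wpM2l => //; lra.
  have : mu * (bbar t - eps) + (1 - mu) * bbar t = bbar t - D by rewrite -mueps; ring.
  lra.
have Oy := Ox y Fy.
have fy : f y <= mu * f xh + (1 - mu) * f xbar by exact: fconv.
have yx : y - xbar = mu *: (xh - xbar).
  by apply/rowP => i; rewrite /y !mxE; ring.
have nyx : enorm (y - x) <= enorm (xh - xbar) + del.
  have h := enorm_tri3 y xbar x; apply: le_trans h _.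
  rewrite yx enormZ ger0_norm // (enormB xbar x).
  apply: lerD; last exact: ltW.
  by rewrite -[X in _ <= X]mul1r; apply: ler_wpM2r => //; exact: enorm_ge0.
have cs : dotp (c - cbar) (y - x) <= D * (enorm (xh - xbar) + del).
  apply: le_trans (CSle _ _) _; apply: ler_pM => //; exact: enorm_ge0.
have first : f x - f xbar + dotp cbar (x - xbar) <= K * D.
  have e1 : dotp c y - dotp c x = dotp cbar (y - xbar) - dotp cbar (x - xbar) + dotp (c - cbar) (y - x).
    rewrite !dotpBr !dotpBl; ring.
  have e2 : dotp cbar (y - xbar) = mu * dotp cbar (xh - xbar) by rewrite yx dotpZr.
  have e3 : mu * (f xh - f xbar + dotp cbar (xh - xbar)) <= mu * A.
    by apply: ler_wpM2l => //; rewrite le_max lexx orbT.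
  have e4 : mu * A = D * (A / eps) by rewrite /mu mulrAC mulrA.
  have e5 : K * D = D + D * (A / eps) + D * (enorm (xh - xbar) + del) by rewrite /K; ring.
  lra.
have fbx : Num.max (supfun T f g cbar bbar xbar x) 0 <= K * D.
  rewrite ge_max (mulr_ge0 (ltW K0) D0) andbT.
  apply: fbar_le => // t Tt.
  have := Fx t Tt; have := bD t Tt => h1 h2.
  have := ler_norm (b t - bbar t) => h3.
  have : D <= K * D by rewrite -[X in X <= _]mul1r; apply: ler_wpM2r.
  lra.
have := H x xd.
have hp : Num.max (supfun T f g cbar bbar xbar x) 0 `^ q <= K `^ q * D `^ q.
  rewrite -powRM; [|exact: ltW|exact: D0].
  have m0 : 0 <= Num.max (supfun T f g cbar bbar xbar x) 0 by rewrite le_max lexx orbT.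
  exact: powR_mono (ltW q0) m0 fbx.
move=> h; rewrite mulrAC ler_pdivrMr // [X in _ <= X]mulrC.
apply: le_trans h hp.
Qed.

End General.


Section Carath.
Variables (R : realType) (m : nat).

Lemma fin_argmin (I : finType) (P : pred I) (F : I -> R) i0 : P i0 ->
  exists j, P j /\ forall i, P i -> F j <= F i.
Proof. by move=> Pi0; case: (arg_minP F Pi0) => j Pj Hj; exists j. Qed.

Definition comb N (lam : 'I_N -> R) (ws : 'I_N -> 'rV[R]_m) : 'rV[R]_m :=
  \sum_(i < N) lam i *: ws i.

Lemma kernel_vec (ws : 'I_m.+1 -> 'rV[R]_m) :
  exists2 al : 'I_m.+1 -> R, (exists i, 0 < al i) & comb al ws = 0.
Proof.
pose M : 'M[R]_(m.+1, m) := \matrix_(i, k) ws i ord0 k.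
have rk : (\rank M <= m)%N := rank_leq_col M.
have Kn0 : kermx M != 0.
  rewrite -mxrank_eq0 mxrank_ker; apply/eqP => h.
  by move: rk; rewrite leqNgt -subn_eq0 h.
have [[k Hk]|H] := pselect (exists k, row k (kermx M) != 0); last first.
  exfalso; move/negP: Kn0; apply; apply/eqP/row_matrixP => k; rewrite row0.
  by apply/eqP; apply: contra_notT H => Hk; exists k.
set a := row k (kermx M).
have aM : a *m M = 0 by rewrite /a -row_mul mulmx_ker row0.
have ca : comb (fun i => a 0 i) ws = 0.
  apply/rowP => j.
  have := congr1 (fun (A : 'rV[R]_m) => A 0 j) aM; rewrite /= [RHS]mxE => h.
  rewrite summxE [RHS]mxE; apply: etrans h; rewrite mxE.
  by apply: eq_bigr => i _; rewrite !mxE.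
have [[i0 Hi0]|H] := pselect (exists i, a 0 i != 0); last first.
  suff a0 : a = 0 by move: Hk; rewrite -/a a0 eqxx.
  apply/rowP => i; rewrite [RHS]mxE; apply/eqP.
  by apply: contra_notT H => Hi; exists i.
have [pos|neg] := ltP 0 (a 0 i0).
  by exists (fun i => a 0 i) => //; exists i0.
exists (fun i => - a 0 i).
  by exists i0; rewrite oppr_gt0 lt_neqAle Hi0 neg.
rewrite /comb; under eq_bigr do rewrite scaleNr.
by rewrite sumrN; move: ca; rewrite /comb => ->; rewrite oppr0.
Qed.

Lemma carath (lam : 'I_m.+1 -> R) (ws : 'I_m.+1 -> 'rV[R]_m) : (forall i, 0 <= lam i) ->
  exists lam' : 'I_m -> R, exists ws' : 'I_m -> 'rV[R]_m,
    (forall i, 0 <= lam' i /\ exists j, ws' i = ws j) /\ comb lam' ws' = comb lam ws.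
Proof.
move=> l0.
have [al [i0 Hi0] cal] := kernel_vec ws.
have [j [Pj Hj]] := @fin_argmin _ (fun i => 0 < al i) (fun i => lam i / al i) i0 Hi0.
set th := lam j / al j.
have th0 : 0 <= th by rewrite divr_ge0 // ltW.
pose l2 i := lam i - th * al i.
have l20 : forall i, 0 <= l2 i.
  move=> i; rewrite /l2 subr_ge0.
  have [ai|ai] := ltP 0 (al i).
    by move: (Hj i ai); rewrite -/th ler_pdivlMr //.
  by apply: le_trans (l0 i); apply: mulr_ge0_le0.
have l2j : l2 j = 0 by rewrite /l2 /th mulfVK ?subrr // gt_eqF.
have cl2 : comb l2 ws = comb lam ws.
  rewrite /comb /l2; under eq_bigr do rewrite scalerBl -scalerA.
  rewrite sumrB -scaler_sumr; move: cal; rewrite /comb => ->.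
  by rewrite scaler0 subr0.
exists (fun i => l2 (lift j i)), (fun i => ws (lift j i)); split.
  by move=> i; split; [exact: l20 | exists (lift j i)].
rewrite -cl2 /comb [in RHS](bigD1_ord j) //= l2j scale0r add0r.
by [].
Qed.

End Carath.

Section ContLemmas.
Variables (R : realType).

Lemma coord_cont (T : topologicalType) a b (i : 'I_a) (j : 'I_b) :
  continuous (fun M : 'M[T]_(a, b) => M i j).
Proof.
move=> M B /= nB.
exists (fun i' j' => if (i' == i) && (j' == j) then B else setT).
  by move=> i' j'; case: ifP => [/andP[/eqP -> /eqP ->]//|_]; exact: filterT.
by move=> N /(_ i j); rewrite !eqxx.
Qed.

Lemma cont_sumR (T : topologicalType) (I : Type) (r : seq I) (F : I -> T -> R) :
  (forall i, continuous (F i)) -> continuous (fun x => \sum_(i <- r) F i x).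
Proof.
move=> Fc; elim: r => [|i r IH].
  rewrite (_ : (fun x => _) = fun _ => 0); first exact: cst_continuous.
  by apply: funext => x; rewrite big_nil.
rewrite (_ : (fun x => _) = fun x => F i x + \sum_(j <- r) F j x).
  by move=> x; apply: cvgD; [exact: Fc | exact: IH].
by apply: funext => x; rewrite big_cons.
Qed.

Lemma cont_mulR (T : topologicalType) (F G : T -> R) :
  continuous F -> continuous G -> continuous (fun x => F x * G x).
Proof. by move=> Fc Gc x; apply: cvgM; [exact: Fc | exact: Gc]. Qed.

Lemma cont_subR (T : topologicalType) (F G : T -> R) :
  continuous F -> continuous G -> continuous (fun x => F x - G x).
Proof. by move=> Fc Gc x; apply: cvgB; [exact: Fc | exact: Gc]. Qed.

End ContLemmas.

Lemma quadL (R : realType) (a b : R) : 0 <= b ->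
  (forall s, 0 < s -> s <= 1 -> 2 * s * a <= s ^+ 2 * b) -> a <= 0.
Proof.
move=> b0 H; rewrite leNgt; apply/negP => a0.
set s := a / (a + b + 1).
have d0 : 0 < a + b + 1 by lra.
have s0 : 0 < s by rewrite divr_gt0.
have s1 : s <= 1 by rewrite /s ler_pdivrMr // mul1r; lra.
have := H s s0 s1.
have e : s * (a + b + 1) = a by rewrite /s mulfVK // gt_eqF.
rewrite expr2 => h.
have h2 : 2 * a <= s * b.
  by rewrite -(ler_pM2l s0); nra.
have h3 : s * b * (a + b + 1) = a * b by rewrite mulrAC e.
have h4 : 2 * a * (a + b + 1) <= a * b by rewrite -h3; apply: ler_wpM2r => //; exact: ltW.
nra.
Qed.

Section Farkas.
Variables (R : realType) (m : nat).
Local Notation V := 'rV[R]_m.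

Lemma dotp_suml N (F : 'I_N -> V) (u : V) : dotp (\sum_(i < N) F i) u = \sum_(i < N) dotp (F i) u.
Proof.
rewrite /dotp (exchange_big) /=; apply: eq_bigr => k _.
by rewrite summxE mulr_suml.
Qed.

Lemma comb_dotp N lam (ws : 'I_N -> V) u : dotp (comb lam ws) u = \sum_(i < N) lam i * dotp (ws i) u.
Proof. by rewrite /comb dotp_suml; apply: eq_bigr => i _; rewrite dotpZl. Qed.

Lemma comb_scale N c lam (ws : 'I_N -> V) : comb (fun i => c * lam i) ws = c *: comb lam ws.
Proof. by rewrite /comb scaler_sumr; apply: eq_bigr => i _; rewrite scalerA. Qed.

Lemma comb_entry N lam (ws : 'I_N -> V) k : comb lam ws 0 k = \sum_(i < N) lam i * ws i 0 k.
Proof. by rewrite /comb summxE; apply: eq_bigr => i _; rewrite mxE. Qed.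

Lemma fst_cont (A B : topologicalType) : continuous (@fst A B).
Proof. by move=> p; exact: cvg_fst. Qed.

Lemma snd_cont (A B : topologicalType) : continuous (@snd A B).
Proof. by move=> p; exact: cvg_snd. Qed.

End Farkas.


HB.instance Definition _ (X Y : ptopologicalType) := Topological.on (X * Y)%type.

Section Farkas2.
Variables (R : realType) (m : nat).
Local Notation V := 'rV[R]_m.

Lemma farkas (W : set V) (e z : V) (eps : R) :
  compact W -> W !=set0 -> 0 < eps -> (forall w, W w -> dotp w e <= - eps) ->
  (exists d, (forall w, W w -> dotp w d <= 0) /\ 0 < dotp z d) \/
  (exists lam : 'I_m -> R, exists ws : 'I_m -> V,
     (forall i, 0 <= lam i /\ W (ws i)) /\ z = comb lam ws).
Proof.
move=> cW [w0 Ww0] eps0 He.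
set ez := (2 * enorm z + 1) * enorm e.
set Lam := ez / eps.
have ez0 : 0 <= ez by rewrite mulr_ge0 ?enorm_ge0 //; have := enorm_ge0 z; lra.
have Lam0 : 0 <= Lam by rewrite divr_ge0 // ltW.
pose PT := ('rV[R]_m * R)%type.
pose P := [set p : 'rV[PT]_m | forall i, (W `*` `[0, Lam]%classic) (p ord0 i)].
pose lp (p : 'rV[PT]_m) i := (p ord0 i).2.
pose wp (p : 'rV[PT]_m) i := (p ord0 i).1.
pose phi' (y : V) := dotp (z - y) (z - y).
pose phi p := phi' (comb (lp p) (wp p)).
have cP : compact P.
  apply: (@rV_compact _ _ (fun _ => W `*` `[0, Lam]%classic)) => i.
  by apply: compact_setX => //; exact: segment_compact.
have P0 : P !=set0.
  exists (\row_i ((w0, 0) : PT)) => i; rewrite mxE; split => //=.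
  by rewrite in_itv /= lexx Lam0.
have phic : continuous phi.
  have lpc : forall i, continuous (fun p => lp p i).
    move=> i p; have h1 := @coord_cont PT 1 m ord0 i p.
    have h2 := @snd_cont _ _ (p ord0 i).
    exact: (cvg_comp _ _ h1 h2).
  have wpc : forall i k, continuous (fun p => wp p i 0 k).
    move=> i k p; have h1 := @coord_cont PT 1 m ord0 i p.
    have h2 := @fst_cont _ _ (p ord0 i).
    have h3 := @coord_cont R^o 1 m ord0 k (p ord0 i).1.
    exact: (cvg_comp _ _ h1 (cvg_comp _ _ h2 h3)).
  rewrite (_ : phi = fun p => \sum_(k < m) (z 0 k - \sum_(i < m) lp p i * wp p i 0 k)
                              * (z 0 k - \sum_(i < m) lp p i * wp p i 0 k)).
    apply: cont_sumR => k; apply: cont_mulR; apply: cont_subR;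
      (try exact: cst_continuous); apply: cont_sumR => i; apply: cont_mulR;
      [exact: lpc | exact: wpc | exact: lpc | exact: wpc].
  apply: funext => p; rewrite /phi /phi' /dotp; apply: eq_bigr => k _.
  by rewrite !mxE comb_entry.
have [p pP pmin] := compact_EVT_min P0 cP (continuous_subspaceT phic).
have {}pP : P p by move: pP; rewrite inE.
have pmin' : forall p', P p' -> phi p <= phi p' by move=> p' Pp'; apply: pmin; rewrite inE.
set ys := comb (lp p) (wp p).
have phi0 : phi p <= dotp z z.
  have P0' : P (\row_i ((w0, 0) : PT)).
    by move=> i; rewrite mxE; split => //=; rewrite in_itv /= lexx Lam0.
  apply: le_trans (pmin' _ P0') _; rewrite /phi /phi'.
  rewrite (_ : comb _ _ = 0) ?subr0 //.
  by rewrite /comb big1 // => i _; rewrite /lp mxE scale0r.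
have C : forall (lam : 'I_m -> R) (ws : 'I_m -> V), (forall i, 0 <= lam i /\ W (ws i)) -> phi p <= phi' (comb lam ws).
  move=> lam ws H.
  have [[k Hk]|small] := pselect (exists k, Lam < lam k); last first.
    have Pp' : P (\row_i ((ws i, lam i) : PT)).
      move=> i; rewrite mxE; split => /=; first by case: (H i).
      rewrite in_itv /=; case: (H i) => -> _ /=; rewrite leNgt; apply/negP => h.
      by apply: small; exists i.
    apply: le_trans (pmin' _ Pp') _; rewrite /phi.
    rewrite (_ : comb _ _ = comb lam ws) //.
    by apply: eq_bigr => i _; rewrite /lp /wp mxE.
  apply: le_trans phi0 _.
  set y := comb lam ws.
  have dye : dotp y e <= - eps * lam k.
    rewrite /y comb_dotp (bigD1 k) //=.
    have h1 : \sum_(i < m | i != k) lam i * dotp (ws i) e <= 0.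
      apply: sumr_le0 => i _; apply: mulr_ge0_le0; first by case: (H i).
      by case: (H i) => _ Wi; have := He _ Wi; lra.
    have h2 : lam k * dotp (ws k) e <= lam k * (- eps).
      by apply: ler_wpM2l; [case: (H k) | case: (H k) => _ /He].
    have h3 : lam k * (- eps) = - eps * lam k by rewrite mulrC.
    lra.
  have cs := CS y e.
  have h4 : eps * lam k <= enorm y * enorm e.
    apply: le_trans cs; rewrite -normrN; apply: le_trans (ler_norm _); lra.
  have h5 : ez < eps * lam k.
    by move: Hk; rewrite /Lam ltr_pdivrMr // mulrC.
  have ne0 := enorm_ge0 e; have nz0 := enorm_ge0 z; have ny0 := enorm_ge0 y.
  have h6 : 2 * enorm z + 1 < enorm y.
    rewrite ltNge; apply/negP => h.
    have : enorm y * enorm e <= (2 * enorm z + 1) * enorm e by apply: ler_wpM2r.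
    rewrite -/ez; lra.
  have h7 := CSle z y.
  rewrite /phi' dotpBl !dotpBr (dotpC y z) -!enorm_sq.
  have h8 : enorm y * (2 * enorm z) <= enorm y * enorm y.
    by apply: ler_wpM2l => //; lra.
  rewrite !expr2; nra.
have C1 : forall (lam : 'I_m.+1 -> R) (ws : 'I_m.+1 -> V), (forall i, 0 <= lam i /\ W (ws i)) ->
    phi p <= phi' (comb lam ws).
  move=> lam ws H.
  have [lam' [ws' [H1 <-]]] := carath ws (fun i => proj1 (H i)).
  apply: C => i; have [l0 [j ->]] := H1 i; split => //; exact: (proj2 (H j)).
have pPi : forall i, 0 <= lp p i /\ W (wp p i).
  move=> i; have [Wi] := pP i; rewrite /= in_itv /= => /andP[h _]; done.
set d := z - ys.
have phis : phi p = dotp d d by [].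
have Hw : forall w, W w -> dotp w d <= 0.
  move=> w Ww; apply: (quadL (dotp_ge0 w)) => s s0 s1.
  pose lam2 (i : 'I_m.+1) := if unlift ord_max i is Some j then lp p j else s.
  pose ws2 (i : 'I_m.+1) := if unlift ord_max i is Some j then wp p j else w.
  have H2 : forall i, 0 <= lam2 i /\ W (ws2 i).
    by move=> i; rewrite /lam2 /ws2; case: unlift => [j|] //; split => //; exact: ltW.
  have := C1 lam2 ws2 H2.
  have -> : comb lam2 ws2 = ys + s *: w.
    rewrite /comb (bigD1_ord ord_max) //= /lam2 /ws2 unlift_none addrC.
    congr (_ + _); apply: eq_bigr => i _; by rewrite liftK.
  rewrite phis /phi' (_ : z - (ys + s *: w) = d - s *: w); last by rewrite /d opprD addrA.
  rewrite !dotpBl !dotpBr !dotpZl !dotpZr (dotpC z w) (dotpC ys w) expr2; nra.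
have Hys : dotp ys d = 0.
  have key : forall c, 0 <= c -> phi p <= phi' (c *: ys).
    move=> c c0; rewrite /ys -comb_scale; apply: C => i.
    by have [l0 Wi] := pPi i; split => //; apply: mulr_ge0.
  apply/eqP; rewrite eq_le; apply/andP; split.
    apply: (quadL (dotp_ge0 ys)) => s s0 s1.
    have := key (1 + s) ltac:(lra).
    rewrite phis /phi' (_ : z - (1 + s) *: ys = d - s *: ys); last first.
      by rewrite /d scalerDl scale1r opprD addrA.
    rewrite !dotpBl !dotpBr !dotpZl !dotpZr (dotpC z ys) expr2; nra.
  rewrite -oppr_le0; apply: (quadL (dotp_ge0 ys)) => s s0 s1.
  have := key (1 - s) ltac:(lra).
  rewrite phis /phi' (_ : z - (1 - s) *: ys = d + s *: ys); last first.
    by apply/rowP => i; rewrite /d !mxE; ring.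
  rewrite !dotpDl !dotpDr !dotpZl !dotpZr !dotpNl !dotpNr ?opprK (dotpC z ys) expr2; nra.
have [d0|dn0] := eqVneq d 0.
  right; exists (lp p), (wp p); split => //.
  by apply/eqP; rewrite -subr_eq0 -/d d0.
left; exists d; split => //.
have -> : z = ys + d by rewrite /d addrC subrK.
rewrite dotpDl Hys add0r lt_def dotp_ge0 andbT.
by apply/eqP => /dotp_eq0 h; move/eqP: dn0.
Qed.

End Farkas2.


Section Lin.
Variable R : realType.

Lemma row_within_cont (Z : topologicalType) (T : set Z) k (F : Z -> 'rV[R]_k) :
  (forall j, {within T, continuous (fun t => F t 0 j)}) -> {within T, continuous F}.
Proof.
move=> Fc; apply/subspace_continuousP => t Tt B [P HP sPB].
have H : \forall s \near within T (nbhs t), forall ij : 'I_1 * 'I_k,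
    P ij.1 ij.2 (F s ij.1 ij.2).
  apply: filter_forall => -[i j] /=; rewrite (ord1 i).
  have := (proj1 (subspace_continuousP _ _) (Fc j)) t Tt.
  by move=> /(_ _ (HP 0 j)).
apply: filterS H => s Hs; apply: sPB => i j; exact: (Hs (i, j)).
Qed.

Lemma lin_dotp n (h : 'rV[R]_n -> R) : linear_fun h ->
  forall x, h x = dotp (\row_i h (delta_mx 0 i)) x.
Proof.
move=> [hD hZ] x.
have h0 : h 0 = 0 by rewrite -(scale0r 0) hZ mul0r.
rewrite {1}(row_sum_delta x).
rewrite (big_morph h hD h0) /dotp; apply: eq_bigr => i _.
by rewrite hZ mxE mulrC.
Qed.

Definition mkv n (c : R) (v : 'rV[R]_n) : 'rV[R]_n.+1 :=
  \row_j (if unlift ord0 j is Some k then v 0 k else c).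

Lemma dotp_mkv n c c' (u v : 'rV[R]_n) : dotp (mkv c u) (mkv c' v) = c * c' + dotp u v.
Proof.
rewrite /dotp (bigD1_ord ord0) //= !mxE unlift_none; congr (_ + _).
by apply: eq_bigr => i _; rewrite !mxE liftK.
Qed.

Lemma mkv_eta n (d : 'rV[R]_n.+1) : d = mkv (d 0 ord0) (\row_k d 0 (lift ord0 k)).
Proof.
apply/rowP => j; rewrite mxE.
case: unliftP => [k ->|->] //; by rewrite mxE.
Qed.

Lemma mkv0 n (v : 'rV[R]_n) c : mkv c v 0 ord0 = c.
Proof. by rewrite mxE unlift_none. Qed.

Lemma mkvS n (v : 'rV[R]_n) c k : mkv c v 0 (lift ord0 k) = v 0 k.
Proof. by rewrite mxE liftK. Qed.

End Lin.


Section KKT.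
Variables (R : realType) (n : nat) (Z : metricType R) (T : set Z)
  (f : 'rV[R]_n -> R) (g : Z -> 'rV[R]_n -> R)
  (cbar : 'rV[R]_n) (bbar : Z -> R) (xbar : 'rV[R]_n).
Hypotheses (cT : compact T)
  (Hg : {within T `*` setT, continuous (fun p : Z * 'rV[R]_n => g p.1 p.2)})
  (Hb : is_CT T bbar) (Hopt : optsol T f g cbar bbar xbar)
  (Hsl : slater T g bbar) (flin : linear_fun f) (glin : forall t, T t -> linear_fun (g t)).

Let av (h : 'rV[R]_n -> R) : 'rV[R]_n := \row_i h (delta_mx 0 i).

Lemma kkt : exists N (lam : 'I_N -> R) (ts : 'I_N -> Z),
  (forall i, T (ts i) /\ 0 <= lam i /\ lam i * (bbar (ts i) - g (ts i) xbar) = 0) /\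
  (forall y, f y + dotp cbar y = - \sum_(i < N) lam i * g (ts i) y).
Proof.
set lv := av f + cbar.
have Lin : forall y, f y + dotp cbar y = dotp lv y.
  by move=> y; rewrite /lv dotpDl -lin_dotp.
have [Fx Ox] := Hopt.
have [T0|Tn0] := eqVneq T set0.
  exists 0%N, (fun _ => 0), (fun i : 'I_0 => False_rect _ ltac:(by case: i)); split; first by case.
  move=> y; rewrite big_ord0 oppr0 Lin.
  have key : forall d, 0 <= dotp lv d.
    move=> d; have := Ox (xbar + d); rewrite !Lin dotpDr.
    have F : feas T g bbar (xbar + d) by rewrite T0.
    by move=> /(_ F); lra.
  have := key y; have := key (- y); rewrite dotpNr; lra.
have [xh Hxh] := Hsl.
have [eps eps0 Heps] : exists2 e, 0 < e & forall t, T t -> e <= bbar t - g t xh.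
  apply: cont_min_pos => //; first exact: is_CT_B Hb (gcont (x:=xh) Hg).
  by move=> t Tt; rewrite subr_gt0; apply: Hxh.
pose w t := mkv (bbar t - g t xbar) (av (g t)).
have gav : forall t y, T t -> g t y = dotp (av (g t)) y by move=> t y Tt; apply: lin_dotp; exact: glin.
have glinB : forall t u v, T t -> g t (u - v) = g t u - g t v.
  move=> t u v Tt; have [hD hZ] := glin Tt.
  by rewrite hD -scaleN1r hZ mulN1r.
have glinDZ : forall t u (s : R) v, T t -> g t (u + s *: v) = g t u + s * g t v.
  by move=> t u s v Tt; have [hD hZ] := glin Tt; rewrite hD hZ.
have cW : compact (w @` T).
  apply: continuous_compact => //; apply: row_within_cont => j.
  have -> : (fun t => w t 0 j) = (fun t => if unlift ord0 j is Some k then g t (delta_mx 0 k)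
                                          else bbar t - g t xbar).
    by apply: funext => t; rewrite /w !mxE; case: unlift => // k; rewrite mxE.
  case: unlift => [k|]; first exact: (gcont (x:=delta_mx 0 k) Hg).
  exact: is_CT_B Hb (gcont (x:=xbar) Hg).
have W0 : (w @` T) !=set0 by have /set0P [t0 Tt0] := Tn0; exists (w t0), t0.
set e := mkv (-1) (xh - xbar).
have He : forall v, (w @` T) v -> dotp v e <= - eps.
  move=> _ [t Tt <-]; rewrite /w /e dotp_mkv -gav // glinB //.
  have := Heps t Tt; lra.
set zv := mkv 0 (- lv).
have [[d [Hd zd]]|[lam [ws [Hws zeq]]]] := farkas zv cW W0 eps0 He.
  exfalso.
  set d' := \row_k d 0 (lift ord0 k); set sg := d 0 ord0.
  have ed : d = mkv sg d' by exact: mkv_eta.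
  rewrite ed /zv dotp_mkv mul0r add0r dotpNl oppr_gt0 in zd.
  have Hd' : forall t, T t -> (bbar t - g t xbar) * sg + g t d' <= 0.
    by move=> t Tt; have := Hd (w t) (ex_intro2 _ _ t Tt erefl); rewrite ed /w dotp_mkv -gav.
  set s0 := (`|sg| + 1)^-1.
  have s00 : 0 < s0 by rewrite invr_gt0; have := normr_ge0 sg; lra.
  have s0s : s0 * `|sg| <= 1.
    rewrite /s0 mulrC ler_pdivrMr ?mul1r; first lra.
    by have := normr_ge0 sg; lra.
  have Fy : feas T g bbar (xbar + s0 *: d').
    move=> t Tt; rewrite glinDZ //.
    have st0 : 0 <= bbar t - g t xbar by have := Fx t Tt; lra.
    have h1 := Hd' t Tt.
    have h2 : s0 * g t d' <= - s0 * ((bbar t - g t xbar) * sg).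
      have -> : - s0 * ((bbar t - g t xbar) * sg) = s0 * (- ((bbar t - g t xbar) * sg)) by ring.
      by apply: ler_wpM2l; [exact: ltW | lra].
    have h3 : - sg <= `|sg| by rewrite -normrN ler_norm.
    have h4 : - s0 * ((bbar t - g t xbar) * sg) <= (bbar t - g t xbar) * (s0 * `|sg|).
      have -> : - s0 * ((bbar t - g t xbar) * sg) = (bbar t - g t xbar) * (s0 * - sg) by ring.
      by apply: ler_wpM2l => //; apply: ler_wpM2l => //; exact: ltW.
    have h5 : (bbar t - g t xbar) * (s0 * `|sg|) <= bbar t - g t xbar.
      by rewrite -[X in _ <= X]mulr1; apply: ler_wpM2l.
    lra.
  have := Ox _ Fy; rewrite !Lin dotpDr dotpZr.
  have : 0 < s0 * - dotp lv d' by apply: mulr_gt0 => //; lra.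
  lra.
have Hws' : forall i, exists t, T t /\ w t = ws i.
  by move=> i; have [t Tt et] := proj2 (Hws i); exists t.
have [ts Hts] := choice Hws'.
have Tts : forall i, T (ts i) by move=> i; have [] := Hts i.
have wts : forall i, ws i = w (ts i) by move=> i; have [_ ->] := Hts i.
have ent : forall j, zv 0 j = \sum_(i < n.+1) lam i * w (ts i) 0 j.
  by move=> j; rewrite zeq comb_entry; apply: eq_bigr => i _; rewrite wts.
exists n.+1, lam, ts; split.
  have h0 := ent ord0; rewrite /zv mkv0 in h0.
  have hs : forall i, 0 <= lam i * (bbar (ts i) - g (ts i) xbar).
    move=> i; apply: mulr_ge0; first by case: (Hws i).
    by have := Fx _ (Tts i); lra.
  have := esym h0; under eq_bigr do rewrite /w mkv0.
  move=> /eqP; rewrite psumr_eq0; last by move=> i _; exact: hs.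
  move=> /allP Hall i; split => //; split; first by case: (Hws i).
  by apply/eqP; exact: (Hall i (mem_index_enum _)).
have lveq : lv = - comb lam (fun i => av (g (ts i))).
  apply/rowP => k; have := ent (lift ord0 k); rewrite /zv mkvS mxE => h.
  rewrite [RHS]mxE comb_entry -[in LHS](opprK (lv 0 k)) h; congr (- _); apply: eq_bigr => i _.
  by rewrite /w mkvS.
move=> y; rewrite Lin lveq dotpNl comb_dotp; congr (- _).
by apply: eq_bigr => i _; rewrite -gav.
Qed.

End KKT.


Section LinCase.
Variables (R : realType) (n : nat) (Z : metricType R) (T : set Z)
  (f : 'rV[R]_n -> R) (g : Z -> 'rV[R]_n -> R) (q : R)
  (cbar : 'rV[R]_n) (bbar : Z -> R) (xbar : 'rV[R]_n).
Hypotheses (cT : compact T)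
  (Hg : {within T `*` setT, continuous (fun p : Z * 'rV[R]_n => g p.1 p.2)})
  (Hb : is_CT T bbar) (Hopt : optsol T f g cbar bbar xbar)
  (Hsl : slater T g bbar) (flin : linear_fun f) (glin : forall t, T t -> linear_fun (g t))
  (q0 : 0 < q).

Local Notation fbar := (supfun T f g cbar bbar xbar).

Lemma ii_iv_lin :
  q_calm (is_CT T) (fun (b b' : Z -> R) => supnormT T (b \- b')) (@eucl_dist R n)
    (fun b => optsol T f g cbar b) q bbar xbar ->
  exists tau : R, 0 < tau /\ exists delta : R, 0 < delta /\
      forall x, enorm (x - xbar) < delta ->
        tau * set_dist (@eucl_dist R n) x [set y | fbar y <= 0]
          <= powR (Num.max (fbar x) 0) q.
Proof.
move=> [tau [tau0 [eps [eps0 [del [del0 H]]]]]].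
have [N [lam [ts [Hk Hl]]]] := kkt cT Hg Hb Hopt Hsl flin glin.
have Tts : forall i, T (ts i) by move=> i; case: (Hk i).
have l0 : forall i, 0 <= lam i by move=> i; case: (Hk i) => _ [].
set Sl := \sum_(i < N) lam i.
set Si := \sum_(i < N) (lam i)^-1.
have Sl0 : 0 <= Sl by apply: sumr_ge0 => i _.
have Si0 : 0 <= Si by apply: sumr_ge0 => i _; rewrite invr_ge0.
set K := 1 + (1 + Sl) * Si.
have K1 : 1 <= K by rewrite /K lerDl mulr_ge0 //; lra.
have K0 : 0 < K by apply: lt_le_trans K1; exact: ltr01.
have Kq0 : 0 < K `^ q by apply: powR_gt0.
have dK0 : 0 < del / K by rewrite divr_gt0.
have dKq : 0 < (del / K) `^ q by apply: powR_gt0.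
rewrite -(Sbar_eq cT Hg Hb Hopt).
exists (Num.min (tau / K `^ q) ((del / K) `^ q / eps)); split.
  by rewrite lt_min !divr_gt0.
exists eps; split => // x xe.
set r := Num.max (fbar x) 0.
have r0 : 0 <= r by rewrite le_max lexx orbT.
have fr : fbar x <= r by rewrite /r le_max lexx.
have sd0 : 0 <= set_dist (@eucl_dist R n) x (optsol T f g cbar bbar).
  by apply: set_dist_ge0 => ? ?; exact: enorm_ge0.
have [Krlt|Krge] := ltP (K * r) del; last first.
  have h3 : set_dist (@eucl_dist R n) x (optsol T f g cbar bbar) <= eucl_dist x xbar.
    by apply: set_dist_le; [move=> ? ?; exact: enorm_ge0 | exact: Hopt].
  have h4 : Num.min (tau / K `^ q) ((del / K) `^ q / eps) * set_dist (@eucl_dist R n) x (optsol T f g cbar bbar)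
     <= (del / K) `^ q / eps * set_dist (@eucl_dist R n) x (optsol T f g cbar bbar).
    by apply: ler_wpM2r => //; rewrite ge_min lexx orbT.
  apply: le_trans h4 _.
  have h5 : (del / K) `^ q / eps * set_dist (@eucl_dist R n) x (optsol T f g cbar bbar)
        <= (del / K) `^ q / eps * eps.
    apply: ler_wpM2l; first by rewrite divr_ge0 // ltW.
    by apply: le_trans h3 _; exact: ltW.
  apply: le_trans h5 _; rewrite mulfVK ?gt_eqF //.
  apply: powR_mono (ltW q0) (ltW dK0) _.
  by rewrite ler_pdivrMr // mulrC.
set b' := fun t => Num.max (g t x) (bbar t - K * r).
have b'C : is_CT T b'.
  exact: is_CT_max (gcont (x:=x) Hg) (is_CT_B Hb (@is_CT_cst _ _ T (K * r))).
have gxr : forall t, T t -> g t x - bbar t <= r.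
  by move=> t Tt; apply: le_trans (fbar_ge2 f cbar xbar cT Hg Hb x Tt) fr.
have Krr : r <= K * r by rewrite -[X in X <= _]mul1r; apply: ler_wpM2r.
have db' : supnormT T (b' \- bbar) <= K * r.
  apply: supn_le => [|t Tt]; first by apply: mulr_ge0 => //; exact: ltW.
  rewrite /= ler_norml; apply/andP; split.
    have : bbar t - K * r <= b' t by rewrite /b' le_max lexx orbT.
    lra.
  rewrite /b'; have := gxr t Tt; case: (leP (g t x) (bbar t - K * r)) => _; lra.
have [Fx Ox] := Hopt.
have lx : f x + dotp cbar x - (f xbar + dotp cbar xbar) <= r.
  have := le_trans (fbar_ge1 f cbar xbar cT Hg Hb x) fr; rewrite dotpBr; lra.
set u := fun i => lam i * (g (ts i) x - g (ts i) xbar).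
have uS : - r <= \sum_(i < N) u i.
  have e : \sum_(i < N) u i = \sum_(i < N) lam i * g (ts i) x - \sum_(i < N) lam i * g (ts i) xbar.
    by rewrite -sumrB; apply: eq_bigr => i _; rewrite /u mulrBr.
  move: lx; rewrite !Hl e; lra.
have act : forall i, 0 < lam i -> g (ts i) xbar = bbar (ts i).
  move=> i li; have [_ [_ h]] := Hk i; move/eqP: h; rewrite mulf_eq0 gt_eqF //=.
  by rewrite subr_eq0 => /eqP ->.
have uub : forall i, u i <= lam i * r.
  move=> i; rewrite /u; have [li|li] := ltP 0 (lam i).
    by apply: ler_wpM2l; [exact: ltW | rewrite (act i li); exact: gxr].
  have -> : lam i = 0 by apply/eqP; rewrite eq_le li l0.
  by rewrite !mul0r.
have ulb : forall i, - ((1 + Sl) * r) <= u i.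
  move=> i; have := uS; rewrite (bigD1 i) //=.
  have : \sum_(j < N | j != i) u j <= Sl * r.
    apply: le_trans (_ : \sum_(j < N | j != i) lam j * r <= _).
      by apply: ler_sum => j _; exact: uub.
    rewrite -mulr_suml; apply: ler_wpM2r => //.
    rewrite /Sl [X in _ <= X](bigD1 i) //=; rewrite lerDr; exact: l0.
  have := uub i; lra.
have b'eq : forall i, lam i * b' (ts i) = lam i * g (ts i) x.
  move=> i; have [li|li] := ltP 0 (lam i); last first.
    have li0 : lam i = 0 by apply/eqP; rewrite eq_le li l0.
    by rewrite li0 !mul0r.
  congr (_ * _); rewrite /b'; apply/max_idPl.
  have h1 := ulb i; rewrite /u (act i li) in h1.
  have h2 : - ((1 + Sl) * r) / lam i <= g (ts i) x - bbar (ts i).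
    by rewrite ler_pdivrMr // [X in _ <= X]mulrC.
  have h3 : (lam i)^-1 <= Si.
    rewrite /Si (bigD1 i) //= lerDl; apply: sumr_ge0 => j _; rewrite invr_ge0; exact: l0.
  have h4 : (1 + Sl) * r * (lam i)^-1 <= (1 + Sl) * r * Si.
    by apply: ler_wpM2l => //; apply: mulr_ge0 => //; lra.
  have h5 : K * r = r + (1 + Sl) * r * Si by rewrite /K; ring.
  move: h2; rewrite mulNr; lra.
have Sx : optsol T f g cbar b' x.
  split; first by move=> t Tt; rewrite /b' le_max lexx.
  move=> z Fz; rewrite !Hl lerN2.
  apply: le_trans (_ : \sum_(i < N) lam i * b' (ts i) <= _).
    by apply: ler_sum => i _; apply: ler_wpM2l => //; exact: Fz.
  by rewrite le_eqVlt; apply/orP; left; apply/eqP; apply: eq_bigr => i _; exact: b'eq.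
have Hx := H b' b'C (le_lt_trans db' Krlt) x Sx xe.
have hp : supnormT T (b' \- bbar) `^ q <= K `^ q * r `^ q.
  rewrite -powRM; [|exact: ltW|exact: r0].
  by apply: powR_mono (ltW q0) (supn_ge0 _ _) db'.
have h6 : Num.min (tau / K `^ q) ((del / K) `^ q / eps) * set_dist (@eucl_dist R n) x (optsol T f g cbar bbar)
     <= tau / K `^ q * set_dist (@eucl_dist R n) x (optsol T f g cbar bbar).
  by apply: ler_wpM2r => //; rewrite ge_min lexx.
apply: le_trans h6 _.
rewrite mulrAC ler_pdivrMr // [X in _ <= X]mulrC.
exact: le_trans Hx hp.
Qed.

End LinCase.

Unset Implicit Arguments. Set Strict Implicit. Set Printing Implicit Defensive.

Theorem theorem4p7 (R : realType) (n : nat) (Z : metricType R) (T : set Z)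
    (f : 'rV[R]_n -> R) (g : Z -> 'rV[R]_n -> R) (q : R)
    (cbar : 'rV[R]_n) (bbar : Z -> R) (xbar : 'rV[R]_n) :
  compact T -> T != setT ->
  convex_fun f -> (forall t, T t -> convex_fun (g t)) ->
  {within T `*` setT, continuous (fun p : Z * 'rV[R]_n => g p.1 p.2)} ->
  0 < q -> q <= 1 ->
  is_CT T bbar ->
  optsol T f g cbar bbar xbar ->
  slater T g bbar ->
  let dCB := fun (cb cb' : 'rV[R]_n * (Z -> R)) =>
    Num.max (enorm (cb.1 - cb'.1)) (supnormT T (cb.2 \- cb'.2)) in
  let dB := fun (b b' : Z -> R) => supnormT T (b \- b') in
  let dAB := fun (ab ab' : R * (Z -> R)) =>
    Num.max (`|ab.1 - ab'.1| : R) (supnormT T (ab.2 \- ab'.2)) in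
  let fbar := supfun T f g cbar bbar xbar in
  let st_i := q_calm (fun cb => is_CT T cb.2) dCB (@eucl_dist R n)
      (fun cb => optsol T f g cb.1 cb.2) q (cbar, bbar) xbar in
  let st_ii := q_calm (is_CT T) dB (@eucl_dist R n)
      (fun b => optsol T f g cbar b) q bbar xbar in
  let st_iii := q_calm (fun ab => is_CT T ab.2) dAB (@eucl_dist R n)
      (levelmap T f g cbar) q (f xbar + dotp cbar xbar, bbar) xbar in
  let st_iv := exists tau : R, 0 < tau /\ exists delta : R, 0 < delta /\
      forall x, enorm (x - xbar) < delta ->
        tau * set_dist (@eucl_dist R n) x [set y | fbar y <= 0]
          <= powR (Num.max (fbar x) 0) q in
  [/\ (st_iii <-> st_iv), (st_iv -> st_i), (st_i -> st_ii) &
      (linear_fun f -> (forall t, T t -> linear_fun (g t)) ->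
        [/\ (st_i <-> st_ii), (st_ii <-> st_iii) & (st_iii <-> st_iv)])].
Proof.
move=> cT _ fconv gconv Hg q0 q1 Hb Hopt Hsl dCB dB dAB fbar st_i st_ii st_iii st_iv.
have h34 : st_iii -> st_iv := iii_iv cT Hg Hb Hopt q0.
have h43 : st_iv -> st_iii := iv_iii cT Hg Hb q0.
have h41 : st_iv -> st_i := iv_i cT Hg Hb Hopt q0 fconv gconv Hsl.
have h12 : st_i -> st_ii := @i_ii _ _ _ _ _ _ _ _ _ _.
split => // flin glin.
have h24 : st_ii -> st_iv := ii_iv_lin cT Hg Hb Hopt Hsl flin glin q0.
split; split; tauto.
Qed.
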